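(* Consider the problem \[ \min_{\hat{\mathbf W}\in\mathbb{R}^{(p+1)\times q},\ \mathbf z\in\mathbb{R}^m}\ f(\hat{\mathbf W},\mathbf z):=\tfrac12\langle \hat{\mathbf W},\hat{\mathbf W}\rangle+\beta\|\mathbf z_+\|_0 \quad\text{s.t.}\quad \mathbf 1+\mathscr A(\hat{\mathbf W})=\mathbf z,\ \ \operatorname{rank}(\hat{\mathbf W})\le r, \] where $\beta>0$, $r<\min\{p+1,q\}$ is a positive integer, $\mathbf A_1,\dots,\mathbf A_m\in\mathbb{R}^{(p+1)\times q}$ are given, and $\mathscr A(\hat{\mathbf W})=(\langle \mathbf A_1,\hat{\mathbf W}\rangle,\dots,\langle \mathbf A_m,\hat{\mathbf W}\rangle)^\top$. Let $(\hat{\mathbf W},\mathbf z)$ be a local minimizer of this problem and suppose the constraint qualification below (Assumption 1) holds at $\hat{\mathbf W}$. Then $(\hat{\mathbf W},\mathbf z)$ is a KKT point of the problem.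
   Context: Notation: $\langle \mathbf W,\mathbf Y\rangle=\operatorname{tr}(\mathbf W^\top\mathbf Y)$; $\mathbf 1\in\mathbb{R}^m$ is the all-ones vector; for $\mathbf z\in\mathbb{R}^m$, $\mathbf z_+$ is the componentwise positive part and $\|\mathbf z_+\|_0$ is the number of strictly positive entries of $\mathbf z$. The adjoint is $\mathscr A^*(\boldsymbol\lambda)=\sum_{i=1}^m \lambda_i\mathbf A_i$. Sets: $\mathcal L=\{(\hat{\mathbf W},\mathbf z): \mathbf 1+\mathscr A(\hat{\mathbf W})=\mathbf z\}$, $\mathcal R=\{\hat{\mathbf W}:\operatorname{rank}(\hat{\mathbf W})\le r\}$, feasible set $\mathcal F=\mathcal L\cap\mathcal R$ (viewed in $\mathbb{R}^{(p+1)\times q}\times\mathbb{R}^m$). For a set $C$ and $x\in C$, $\mathrm N_C(x)$ is the regular (Fréchet) normal cone $\{v:\limsup_{x'\to x,\,x'\in C,\,x'\neq x}\langle v,x'-x\rangle/\|x'-x\|\le 0\}$. Lagrangian: $\mathscr L(\hat{\mathbf W},\mathbf z,\boldsymbol\lambda)=\tfrac12\langle\hat{\mathbf W},\hat{\mathbf W}\rangle+\beta\|\mathbf z_+\|_0+\langle\boldsymbol\lambda,\mathbf 1+\mathscr A(\hat{\mathbf W})-\mathbf z\rangle$, with $\nabla_{\hat{\mathbf W}}\mathscr L=\hat{\mathbf W}+\mathscr A^*(\boldsymbol\lambda)$ and $\partial_{\mathbf z}\mathscr L=\beta\,\partial\|\mathbf z_+\|_0-\boldsymbol\lambda$, where the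 regular subdifferential is $\partial\|\mathbf z_+\|_0=\{\mathbf d\in\mathbb{R}^m: d_i=0 \text{ if } z_i\neq0,\ d_i\ge 0 \text{ if } z_i=0\}$. KKT point: $(\hat{\mathbf W},\mathbf z)$ is a KKT point if there exists $\boldsymbol\lambda\in\mathbb{R}^m$ such that $-\partial_{(\hat{\mathbf W},\mathbf z)}\mathscr L(\hat{\mathbf W},\mathbf z,\boldsymbol\lambda)\in \mathrm N_{\mathcal F}(\hat{\mathbf W},\mathbf z)$ (i.e., some element of the partial subdifferential of $\mathscr L$ in $(\hat{\mathbf W},\mathbf z)$ has its negative in the normal cone), $\operatorname{rank}(\hat{\mathbf W})\le r$, and $\mathbf 1+\mathscr A(\hat{\mathbf W})-\mathbf z=0$. Assumption 1 at $\hat{\mathbf W}$: let $s=\operatorname{rank}(\hat{\mathbf W})$ and $\hat{\mathbf W}=\mathbf U\Sigma\mathbf V^\top$ be an SVD with $\mathbf U$, $\mathbf V$ orthogonal of sizes $p+1$, $q$; let $\Gamma$ be the index set of nonzero singular values, $\Gamma_p^\perp=\{1,\dots,p+1\}\setminus\Gamma$, $\Gamma_q^\perp=\{1,\dots,q\}\setminus\Gamma$, and $\mathbf U_J$, $\mathbf V_J$ the column submatrices indexed by $J$. Define $\mathbf T^i=\begin{bmatrix}\mathbf U_\Gamma^\top\mathbf A_i\mathbf V_\Gamma & \mathbf U_\Gamma^\top\mathbf A_i\mathbf V_{\Gamma_q^\perp}\\ \mathbf U_{\Gamma_p^\perp}^\top\mathbf A_i\mathbf V_\Gamma & \mathbf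 O\end{bmatrix}$ and $\mathbf R^i=\mathbf U^\top\mathbf A_i\mathbf V_\Gamma$, $i=1,\dots,m$. The assumption is: if $s=r$, the matrices $\mathbf T^1,\dots,\mathbf T^m$ are linearly independent; if $s<r$, the matrices $\mathbf R^1,\dots,\mathbf R^m$ are linearly independent. *)

(* Defs.v *)
From HB Require Import structures.
From mathcomp Require Import all_boot all_order all_algebra.
From mathcomp Require Import reals.
Set Implicit Arguments. Unset Strict Implicit. Unset Printing Implicit Defensive.
Import Order.TTheory GRing.Theory Num.Theory.
Local Open Scope ring_scope.

Section Defs.
Variable R : realType.

Definition minner (a b : nat) (X Y : 'M[R]_(a, b)) : R := \tr (X^T *m Y).

Variables (p q m : nat).
Notation Mat := 'M[R]_(p.+1, q).
Notation Vec := 'cV[R]_m.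

Definition pnorm (W : Mat) (z : Vec) : R := Num.sqrt (minner W W + minner z z).

Definition Aop (A : 'I_m -> Mat) (W : Mat) : Vec := \col_i minner (A i) W.

Definition Aadj (A : 'I_m -> Mat) (lam : Vec) : Mat := \sum_i lam i 0 *: A i.

Definition pos0 (z : Vec) : nat := #|[set i | 0 < z i 0]|.

Definition obj (beta : R) (W : Mat) (z : Vec) : R :=
  minner W W / 2 + beta * (pos0 z)%:R.

Definition feasible (A : 'I_m -> Mat) (r : nat) (W : Mat) (z : Vec) : Prop :=
  const_mx 1 + Aop A W = z /\ (\rank W <= r)%N.

Definition local_min (A : 'I_m -> Mat) (beta : R) (r : nat) (W : Mat) (z : Vec) : Prop :=
  feasible A r W z /\
  exists eps : R, 0 < eps /\
    forall (W' : Mat) (z' : Vec), feasible A r W' z' ->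
      pnorm (W' - W) (z' - z) < eps -> obj beta W z <= obj beta W' z'.

(* regular (Frechet) normal cone of F at (W,z), containing (V,u):
   limsup_{(W',z') -> (W,z), (W',z') in F, (W',z') <> (W,z)}
      <(V,u),(W',z')-(W,z)> / ||(W',z')-(W,z)|| <= 0,
   written out in epsilon-delta form. *)
Definition in_normal_cone (A : 'I_m -> Mat) (r : nat) (W : Mat) (z : Vec)
    (V : Mat) (u : Vec) : Prop :=
  forall eps : R, 0 < eps -> exists delta : R, 0 < delta /\
    forall (W' : Mat) (z' : Vec), feasible A r W' z' ->
      0 < pnorm (W' - W) (z' - z) -> pnorm (W' - W) (z' - z) < delta ->
      minner V (W' - W) + minner u (z' - z) <= eps * pnorm (W' - W) (z' - z).

Definition subdiff_pos0 (z d : Vec) : Prop :=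
  forall i, (z i 0 != 0 -> d i 0 = 0) /\ (z i 0 = 0 -> 0 <= d i 0).

(* KKT point: some element (W + A^*(lam), beta d - lam) of the partial
   subdifferential of the Lagrangian has its negative in N_F(W,z). *)
Definition KKT (A : 'I_m -> Mat) (beta : R) (r : nat) (W : Mat) (z : Vec) : Prop :=
  exists lam : Vec, exists d : Vec,
    subdiff_pos0 z d /\
    in_normal_cone A r W z (- (W + Aadj A lam)) (- (beta *: d - lam)) /\
    (\rank W <= r)%N /\ const_mx 1 + Aop A W - z = 0.

Definition lin_indep (a b : nat) (F : 'I_m -> 'M[R]_(a, b)) : Prop :=
  forall c : 'I_m -> R, \sum_i c i *: F i = 0 -> forall i, c i = 0.

Definition inGamma (S : Mat) (k : nat) : bool :=
  [exists i : 'I_p.+1, [exists j : 'I_q,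
     [&& (i == k :> nat), (j == k :> nat) & S i j != 0]]].

(* T^i, up to the row/column permutation putting Gamma first:
   the entries of U^T A_i V outside the (Gamma_p^perp x Gamma_q^perp) block *)
Definition Tmat (U : 'M[R]_p.+1) (V : 'M[R]_q) (S : Mat) (Ai : Mat) : Mat :=
  \matrix_(a, b) if inGamma S a || inGamma S b then (U^T *m Ai *m V) a b else 0.

(* R^i = U^T A_i V_Gamma, with the columns outside Gamma padded by zeros *)
Definition Rmat (U : 'M[R]_p.+1) (V : 'M[R]_q) (S : Mat) (Ai : Mat) : Mat :=
  \matrix_(a, b) if inGamma S b then (U^T *m Ai *m V) a b else 0.

Definition assumption1 (A : 'I_m -> Mat) (r : nat) (W : Mat) : Prop :=
  exists (U : 'M[R]_p.+1) (V : 'M[R]_q) (S : Mat),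
    [/\ U^T *m U = 1%:M, V^T *m V = 1%:M, W = U *m S *m V^T,
        (forall (i : 'I_p.+1) (j : 'I_q), (i : nat) <> j -> S i j = 0) &
        (forall (i : 'I_p.+1) (j : 'I_q), (i : nat) = j -> 0 <= S i j)] /\
    (\rank W = r -> lin_indep (fun i => Tmat U V S (A i))) /\
    ((\rank W < r)%N -> lin_indep (fun i => Rmat U V S (A i))).

End Defs.

(* Main.v *)
Require Import Defs.
From HB Require Import structures.
From mathcomp Require Import all_boot all_order all_algebra.
From mathcomp Require Import reals.
From mathcomp Require Import ring lra.
Import Order.TTheory GRing.Theory Num.Theory.
Local Open Scope ring_scope.
Set Implicit Arguments. Unset Strict Implicit. Unset Printing Implicit Defensive.

Lemma minnerE (R : realType) (a b : nat) (X Y : 'M[R]_(a, b)) :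
  minner X Y = \sum_i \sum_j X i j * Y i j.
Proof.
rewrite /minner /mxtrace exchange_big /=; apply: eq_bigr => j _.
rewrite !mxE; apply: eq_bigr => i _; by rewrite mxE.
Qed.

Lemma minnerC (R : realType) (a b : nat) (X Y : 'M[R]_(a, b)) :
  minner X Y = minner Y X.
Proof. rewrite !minnerE; apply: eq_bigr => i _; apply: eq_bigr => j _; exact: mulrC. Qed.

Lemma minnerDr (R : realType) (a b : nat) (X Y Z : 'M[R]_(a, b)) :
  minner X (Y + Z) = minner X Y + minner X Z.
Proof.
rewrite !minnerE -big_split; apply: eq_bigr => i _; rewrite -big_split.
apply: eq_bigr => j _; by rewrite mxE mulrDr.
Qed.

Lemma minnerZr (R : realType) (a b : nat) (c : R) (X Y : 'M[R]_(a, b)) :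
  minner X (c *: Y) = c * minner X Y.
Proof.
rewrite !minnerE mulr_sumr; apply: eq_bigr => i _; rewrite mulr_sumr.
apply: eq_bigr => j _; by rewrite mxE mulrCA.
Qed.

Lemma minnerDl (R : realType) (a b : nat) (X Y Z : 'M[R]_(a, b)) :
  minner (Y + Z) X = minner Y X + minner Z X.
Proof. by rewrite minnerC minnerDr !(minnerC X). Qed.

Lemma minnerZl (R : realType) (a b : nat) (c : R) (X Y : 'M[R]_(a, b)) :
  minner (c *: Y) X = c * minner Y X.
Proof. by rewrite minnerC minnerZr minnerC. Qed.

Lemma minner0r (R : realType) (a b : nat) (X : 'M[R]_(a, b)) : minner X 0 = 0.
Proof. by rewrite -(scale0r (0 : 'M[R]_(a,b))) minnerZr mul0r. Qed.

Lemma minner0l (R : realType) (a b : nat) (X : 'M[R]_(a, b)) : minner 0 X = 0.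
Proof. by rewrite minnerC minner0r. Qed.

Lemma minnerNr (R : realType) (a b : nat) (X Y : 'M[R]_(a, b)) :
  minner X (- Y) = - minner X Y.
Proof. by rewrite -scaleN1r minnerZr mulN1r. Qed.

Lemma minnerNl (R : realType) (a b : nat) (X Y : 'M[R]_(a, b)) :
  minner (- X) Y = - minner X Y.
Proof. by rewrite minnerC minnerNr minnerC. Qed.

Lemma minnerBr (R : realType) (a b : nat) (X Y Z : 'M[R]_(a, b)) :
  minner X (Y - Z) = minner X Y - minner X Z.
Proof. by rewrite minnerDr minnerNr. Qed.

Lemma minnerBl (R : realType) (a b : nat) (X Y Z : 'M[R]_(a, b)) :
  minner (Y - Z) X = minner Y X - minner Z X.
Proof. by rewrite minnerDl minnerNl. Qed.

Lemma minner_sumr (R : realType) (a b : nat) (I : finType) (X : 'M[R]_(a, b))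
   (F : I -> 'M[R]_(a, b)) :
  minner X (\sum_i F i) = \sum_i minner X (F i).
Proof.
apply: (big_ind2 (fun u v => minner X u = v)); first exact: minner0r.
  by move=> ? ? ? ? <- <-; rewrite minnerDr.
by [].
Qed.

Lemma minner_suml (R : realType) (a b : nat) (I : finType) (X : 'M[R]_(a, b))
   (F : I -> 'M[R]_(a, b)) :
  minner (\sum_i F i) X = \sum_i minner (F i) X.
Proof. rewrite minnerC minner_sumr; apply: eq_bigr => i _; exact: minnerC. Qed.

Lemma minner_ge0 (R : realType) (a b : nat) (X : 'M[R]_(a, b)) : 0 <= minner X X.
Proof. rewrite minnerE; apply: sumr_ge0 => i _; apply: sumr_ge0 => j _; exact: sqr_ge0. Qed.

Lemma minner_entry (R : realType) (a b : nat) (X : 'M[R]_(a, b)) i j :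
  X i j ^+ 2 <= minner X X.
Proof.
rewrite minnerE (bigD1 i) //= (bigD1 j) //= -expr2 -addrA lerDl.
apply: addr_ge0; first by apply: sumr_ge0 => k _; rewrite -expr2 sqr_ge0.
apply: sumr_ge0 => k _; apply: sumr_ge0 => l _; rewrite -expr2 sqr_ge0 //.
Qed.

Lemma minner_eq0 (R : realType) (a b : nat) (X : 'M[R]_(a, b)) :
  minner X X = 0 -> X = 0.
Proof.
move=> h; apply/matrixP => i j; rewrite mxE.
have := minner_entry X i j; rewrite h => H.
apply/eqP; rewrite -sqrf_eq0 eq_le sqr_ge0 andbT //.
Qed.

Definition ev (R : realType) (P : R -> Prop) :=
  exists d : R, 0 < d /\ forall t, 0 < t -> t < d -> P t.

Lemma ev_and (R : realType) (P Q : R -> Prop) : ev P -> ev Q -> ev (fun t => P t /\ Q t).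
Proof.
move=> [d1 [d1p H1]] [d2 [d2p H2]]; exists (Num.min d1 d2); split.
  by rewrite lt_min d1p d2p.
move=> t t0; rewrite lt_min => /andP[a b]; split; [exact: H1|exact: H2].
Qed.

Lemma ev_impl (R : realType) (P Q : R -> Prop) :
  ev P -> (forall t, 0 < t -> P t -> Q t) -> ev Q.
Proof. move=> [d [dp Hd]] H; exists d; split => // t t0 td; apply: H => //; exact: Hd. Qed.

Lemma ev_true (R : realType) (P : R -> Prop) : (forall t, P t) -> ev P.
Proof. move=> H; exists 1; split => //. Qed.

Lemma ev_seq (R : realType) (I : eqType) (s : seq I) (P : I -> R -> Prop) :
  (forall i, ev (P i)) -> ev (fun t => forall i, i \in s -> P i t).
Proof.
move=> H; elim: s => [|x s IH]; first by apply: ev_true => t i.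
apply: (ev_impl (ev_and (H x) IH)) => t _ [h1 h2] i; rewrite inE => /orP[/eqP->//|].
exact: h2.
Qed.

Lemma ev_all (R : realType) (I : finType) (P : I -> R -> Prop) :
  (forall i, ev (P i)) -> ev (fun t => forall i, P i t).
Proof.
move=> H; apply: (ev_impl (ev_seq (enum I) H)) => t _ h i; apply: h; by rewrite mem_enum.
Qed.

Lemma ev_ex (R : realType) (P : R -> Prop) : ev P -> exists t, 0 < t /\ P t.
Proof.
move=> [d [dp H]]; exists (d / 2); split; first by rewrite divr_gt0.
apply: H; first by rewrite divr_gt0.
by rewrite ltr_pdivrMr // ltr_pMr // ltr1n.
Qed.

Lemma ev_lt1 (R : realType) : ev (fun t : R => t < 1).
Proof. by exists 1; split. Qed.

Lemma ev_small (R : realType) (K e : R) : 0 < e -> ev (fun t => t * K < e).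
Proof.
move=> ep; exists (e / (`|K| + 1)); split.
  by rewrite divr_gt0 // ltr_wpDl.
move=> t t0; rewrite ltr_pdivlMr ?ltr_wpDl // => h.
apply: le_lt_trans h; rewrite mulrDr mulr1 ler_wpDr ?(ltW t0) //.
by rewrite ler_pM2l // ler_norm.
Qed.

Lemma tle (R : realType) (t c : R) : 0 < t -> t < 1 -> t * c <= `|c|.
Proof.
move=> t0 t1; apply: (le_trans (ler_norm _)); rewrite normrM gtr0_norm //.
by rewrite ler_piMl // ltW.
Qed.

Lemma eps_lim (R : realType) (a b : R) : (forall e, 0 < e -> 0 <= a + e * b) -> 0 <= a.
Proof.
move=> H; rewrite leNgt; apply/negP => a0.
have hp : 0 < - a / (`|b| + 1) by rewrite divr_gt0 ?oppr_gt0 // ltr_wpDl.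
have := H _ hp; apply/negP; rewrite -ltNge.
have e1 : - a / (`|b| + 1) * b <= - a / (`|b| + 1) * `|b|.
  by rewrite ler_pM2l // ler_norm.
apply: (le_lt_trans (_ : _ <= a + - a / (`|b| + 1) * `|b|)); first by rewrite lerD2l.
have -> : a + - a / (`|b| + 1) * `|b| = a / (`|b| + 1).
  have nz : `|b| + 1 != 0 by rewrite gt_eqF // ltr_wpDl.
  by field.
by rewrite pmulr_llt0 // invr_gt0 ltr_wpDl.
Qed.

Lemma AopE (R : realType) p q m (A : 'I_m -> 'M[R]_(p.+1, q)) X i j :
  Aop A X i j = minner (A i) X.
Proof. by rewrite mxE. Qed.

Lemma AopD (R : realType) p q m (A : 'I_m -> 'M[R]_(p.+1, q)) X Y :
  Aop A (X + Y) = Aop A X + Aop A Y.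
Proof. by apply/matrixP => i j; rewrite !mxE minnerDr. Qed.

Lemma AopZ (R : realType) p q m (A : 'I_m -> 'M[R]_(p.+1, q)) c X :
  Aop A (c *: X) = c *: Aop A X.
Proof. by apply/matrixP => i j; rewrite !mxE minnerZr. Qed.

Lemma AopB (R : realType) p q m (A : 'I_m -> 'M[R]_(p.+1, q)) X Y :
  Aop A (X - Y) = Aop A X - Aop A Y.
Proof. by apply/matrixP => i j; rewrite !mxE minnerBr. Qed.

Lemma tle2 (R : realType) (t c : R) : 0 < t -> t < 1 -> t * (t * c) <= `|c|.
Proof.
move=> t0 t1; apply: (le_trans (tle _ t0 t1)); rewrite normrM gtr0_norm //.
by rewrite ler_piMl // ltW.
Qed.

Lemma N2bound (R : realType) a b (M N : 'M[R]_(a, b)) t : 0 < t -> t < 1 ->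
  minner (M + t *: N) (M + t *: N) <= `|minner M M| + 2 * `|minner M N| + `|minner N N|.
Proof.
move=> t0 t1.
rewrite !minnerDl !minnerDr !minnerZl !minnerZr (minnerC N M).
have h1 := tle (minner M N) t0 t1; have h2 := tle2 (minner N N) t0 t1.
have h3 := ler_norm (minner M M).
lra.
Qed.

Lemma lin_step (R : realType) a b (M N P : 'M[R]_(a, b)) (t : R) :
  M + t *: N + t ^+ 2 *: P - M = t *: (N + t *: P).
Proof. by apply/matrixP => i j; rewrite !mxE; ring. Qed.

Lemma N2Z (R : realType) a b (M : 'M[R]_(a, b)) (t : R) :
  minner (t *: M) (t *: M) = t ^+ 2 * minner M M.
Proof. by rewrite minnerZl minnerZr mulrA expr2. Qed.

Lemma FO (R : realType) (p q m r : nat) (beta : R) (A : 'I_m -> 'M[R]_(p.+1, q))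
   W z (X : 'M[R]_p.+1) (Y : 'M[R]_q) (E : 'M[R]_(p.+1, q)) :
  0 <= beta -> local_min A beta r W z -> (\rank W + \rank E <= r)%N ->
  (forall i, z i 0 = 0 -> minner (A i) (X *m W + W *m Y + E) < 0) ->
  0 <= minner W (X *m W + W *m Y + E).
Proof.
move=> b0 [[fz _] [eps [ep Hmin]]] rk Hact.
move: Hact; set D := X *m W + W *m Y + E => Hact.
set B := X *m W *m Y.
pose Wt t := W + t *: D + t ^+ 2 *: B.
have WtE t : Wt t = (1%:M + t *: X) *m W *m (1%:M + t *: Y) + t *: E.
  have e1 : (1%:M + t *: X) *m W = W + t *: (X *m W) by rewrite mulmxDl mul1mx -scalemxAl.
  rewrite e1 mulmxDr mulmx1 !mulmxDl -!scalemxAr -!scalemxAl scalerA -expr2.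
  rewrite /Wt /D /B.
  by apply/matrixP => i j; rewrite !mxE; ring.
pose zt t := const_mx 1 + Aop A (Wt t).
have feas t : feasible A r (Wt t) (zt t).
  split => //; rewrite WtE; apply: leq_trans (mxrank_add _ _) _.
  apply: leq_trans rk; apply: leq_add; last exact: mxrank_scale.
  apply: leq_trans (mxrankM_maxl _ _) _; exact: mxrankM_maxr.
have WtW t : Wt t - W = t *: (D + t *: B) by rewrite /Wt lin_step.
have ztE t : zt t - z = t *: (Aop A D + t *: Aop A B).
  rewrite -fz /zt /Wt !AopD !AopZ; apply/matrixP => i j; rewrite !mxE /D !minnerDr; ring.
rewrite leNgt; apply/negP => neg.
pose K1 := `|minner D D| + 2 * `|minner D B| + `|minner B B|.
pose K2 := `|minner (Aop A D) (Aop A D)| + 2 * `|minner (Aop A D) (Aop A B)|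
          + `|minner (Aop A B) (Aop A B)|.
have ev1 : ev (fun t => pnorm (Wt t - W) (zt t - z) < eps).
  have := ev_and (ev_lt1 R) (ev_small (K1 + K2) (mulr_gt0 ep ep)).
  move=> HH; apply: (ev_impl HH) => t t0 [t1 h].
  rewrite /pnorm WtW ztE !N2Z -mulrDr.
  rewrite -(gtr0_norm ep) -sqrtr_sqr ltr_sqrt ?exprn_gt0 //.
  apply: le_lt_trans h; rewrite expr2 -mulrA ler_pM2l //.
  have := N2bound D B t0 t1; have := N2bound (Aop A D) (Aop A B) t0 t1.
  have := minner_ge0 (D + t *: B); have := minner_ge0 (Aop A D + t *: Aop A B).
  rewrite -/K1 -/K2; nra.
have ev2 : ev (fun t => forall i, z i 0 <= 0 -> zt t i 0 <= 0).
  apply: ev_all => i.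
  have ztiE t : zt t i 0 = z i 0 + t * (minner (A i) D + t * minner (A i) B).
    by rewrite /zt /Wt -fz !mxE 2!minnerDr !minnerZr; ring.
  case: (ltgtP (z i 0) 0) => zi.
  - have zi' : 0 < - z i 0 by rewrite oppr_gt0.
    apply: (ev_impl (ev_and (ev_lt1 R) (ev_small (`|minner (A i) D| + `|minner (A i) B|) zi'))) => t t0 [t1 h] _.
    rewrite ztiE.
    have := tle (minner (A i) B) t0 t1; have := ler_norm (minner (A i) D); nra.
  - by apply: ev_true.
  - have a0 := Hact i zi.
    have a0' : 0 < - minner (A i) D by rewrite oppr_gt0.
    apply: (ev_impl (ev_and (ev_lt1 R) (ev_small (`|minner (A i) B|) a0'))) => t t0 [t1 h] _.
    rewrite ztiE zi.
    have := ler_norm (minner (A i) B); nra.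
have ev3 : ev (fun t => minner (Wt t) (Wt t) < minner W W).
  have n' : 0 < - (2 * minner W D) by lra.
  apply: (ev_impl (ev_and (ev_lt1 R) (ev_small (2 * `|minner W B| + K1) n'))) => t t0 [t1 h].
  have -> : Wt t = W + t *: (D + t *: B) by rewrite -(WtW t) addrC subrK.
  rewrite minnerDl !minnerDr !minnerZl !minnerZr minnerDl minnerDr minnerZl minnerZr (minnerC D W) (minnerC B W).
  have := N2bound D B t0 t1; rewrite -/K1 => hb.
  have := ler_norm (minner W B); nra.
have [t [t0 [[h1 h2] h3]]] := ev_ex (ev_and (ev_and ev1 ev2) ev3).
have := Hmin _ _ (feas t) h1; rewrite /obj.
have hc : ((pos0 (zt t)) <= pos0 z)%N.
  apply: subset_leq_card; apply/subsetP => i; rewrite !inE => hi.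
  rewrite ltNge; apply/negP => /h2; by rewrite leNgt hi.
have : beta * (pos0 (zt t))%:R <= beta * (pos0 z)%:R by rewrite ler_wpM2l // ler_nat.
lra.
Qed.

Lemma sumT_ord (R : realType) (T : finType) (F : T -> R) :
  \sum_t F t = \sum_(k < #|T|) F (enum_val k).
Proof.
rewrite (reindex (@enum_val T (mem T))) //.
exists enum_rank => [t _|k _]; [exact: enum_valK | exact: enum_rankK].
Qed.

Lemma surj (R : realType) a b m (T : finType) (h : T -> 'M[R]_(a, b))
    (g : 'I_m -> 'M[R]_(a, b)) (I0 : pred 'I_m) :
  (forall c : 'I_m -> R, (forall i, ~~ I0 i -> c i = 0) ->
     (forall t, minner (\sum_i c i *: g i) (h t) = 0) -> forall i, c i = 0) ->
  exists sol : ('I_m -> R) -> T -> R, forall alpha i,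
    I0 i -> minner (g i) (\sum_t sol alpha t *: h t) = alpha i.
Proof.
move=> CQ.
pose Mphi : 'M[R]_(#|T|, m) :=
  \matrix_(k, i) (if I0 i then minner (g i) (h (enum_val k)) else 0).
pose av (alpha : 'I_m -> R) : 'rV[R]_m := \row_i (if I0 i then alpha i else 0).
suff Hs : forall alpha, (av alpha <= Mphi)%MS.
  exists (fun alpha t => (av alpha *m pinvmx Mphi) 0 (enum_rank t)) => alpha i Ii.
  have Hx := esym (mulmxKpV (Hs alpha)).
  have := congr1 (fun M : 'rV[R]_m => M 0 i) Hx; rewrite /= [in LHS]mxE Ii => ->.
  rewrite [in RHS]mxE minner_sumr sumT_ord; apply: eq_bigr => k _.
  by rewrite minnerZr enum_valK [Mphi _ _]mxE Ii.
move=> alpha; set av0 := av alpha.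
apply/negPn/negP; rewrite submxE => /eqP hne.
set C := cokermx Mphi in hne.
have [j hj] : exists j, (av0 *m C) 0 j != 0.
  apply/existsP; apply: contra_notT hne => /existsPn H.
  apply/matrixP => i k; rewrite [i]ord1 [RHS]mxE; by move: (H k); rewrite negbK => /eqP.
pose c i := if I0 i then C i j else 0.
have c0 : forall i, c i = 0.
  apply: CQ => [i /negbTE Ii|t]; first by rewrite /c Ii.
  rewrite minner_suml.
  have := congr1 (fun M : 'M[R]_(#|T|, m) => M (enum_rank t) j) (mulmx_coker Mphi).
  rewrite /= [in RHS]mxE mxE => h0; rewrite -[RHS]h0; apply: eq_bigr => i _.
  rewrite minnerZl [Mphi _ _]mxE enum_rankK /c; case: (I0 i); first by rewrite mulrC.
  by rewrite !mul0r.
move: hj; rewrite mxE (eq_bigr (fun i => alpha i * c i)) ?big1 ?eqxx //.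
  by move=> i _; rewrite c0 mulr0.
by move=> i _; rewrite /av0 mxE /c; case: (I0 i); rewrite ?mul0r ?mulr0.
Qed.

Definition lspan (R : realType) a b (T : finType) (h : T -> 'M[R]_(a, b)) (F : 'M[R]_(a, b)) :=
  exists x : T -> R, F = \sum_t x t *: h t.

Lemma lspanD (R : realType) a b (T : finType) (h : T -> 'M[R]_(a, b)) F1 F2 (s : R) :
  lspan h F1 -> lspan h F2 -> lspan h (F1 + s *: F2).
Proof.
move=> [x1 ->] [x2 ->]; exists (fun t => x1 t + s * x2 t).
rewrite scaler_sumr -big_split; apply: eq_bigr => t _; by rewrite scalerDl scalerA.
Qed.

Lemma lspan0 (R : realType) a b (T : finType) (h : T -> 'M[R]_(a, b)) : lspan h 0.
Proof. exists (fun _ => 0); rewrite big1 // => t _; exact: scale0r. Qed.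

Lemma lspanN (R : realType) a b (T : finType) (h : T -> 'M[R]_(a, b)) F : lspan h F -> lspan h (- F).
Proof. move=> sF; have := lspanD (-1) (lspan0 h) sF; by rewrite add0r scaleN1r. Qed.

Lemma lspanh (R : realType) a b (T : finType) (h : T -> 'M[R]_(a, b)) t : lspan h (h t).
Proof.
exists (fun u => (u == t)%:R); rewrite (bigD1 t) //= eqxx scale1r big1 ?addr0 //.
by move=> u /negbTE ->; rewrite scale0r.
Qed.

Lemma mult (R : realType) a b m (T : finType) (h : T -> 'M[R]_(a, b))
    (g : 'I_m -> 'M[R]_(a, b)) (I0 : pred 'I_m) (w : 'M[R]_(a, b))
    (Eset : 'M[R]_(a, b) -> Prop) :
  (forall c : 'I_m -> R, (forall i, ~~ I0 i -> c i = 0) ->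
     (forall t, minner (\sum_i c i *: g i) (h t) = 0) -> forall i, c i = 0) ->
  Eset 0 -> (forall E, Eset E -> Eset (- E)) ->
  (forall F E, lspan h F -> Eset E ->
     (forall i, I0 i -> minner (g i) (F + E) < 0) -> 0 <= minner w (F + E)) ->
  exists mu : 'I_m -> R, [/\ (forall i, 0 <= mu i), (forall i, ~~ I0 i -> mu i = 0) &
     (forall F E, lspan h F -> Eset E -> minner (w + \sum_i mu i *: g i) (F + E) = 0)].
Proof.
move=> CQ E0 EN FO.
have [sol Hsol] := surj CQ.
pose Fs alpha := \sum_t sol alpha t *: h t.
have sF alpha : lspan h (Fs alpha) by exists (sol alpha).
have HF alpha i : I0 i -> minner (g i) (Fs alpha) = alpha i by move=> Ii; exact: Hsol.
pose F0 := Fs (fun _ => -1).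
pose Fj j := Fs (fun i => - (i == j)%:R).
have Ha : forall F E, lspan h F -> Eset E -> (forall i, I0 i -> minner (g i) (F + E) = 0) ->
    minner w (F + E) = 0.
  move=> F E sFF sE h0.
  have key : forall F E, lspan h F -> Eset E -> (forall i, I0 i -> minner (g i) (F + E) = 0) ->
      0 <= minner w (F + E).
    move=> F' E' sF' sE' h0'; apply: (@eps_lim _ _ (minner w F0)) => s s0.
    have := FO (F' + s *: F0) E' (lspanD s sF' (sF _)) sE'.
    have -> : F' + s *: F0 + E' = (F' + E') + s *: F0 by rewrite addrAC.
    rewrite minnerDr minnerZr; apply => i Ii.
    rewrite minnerDr minnerZr h0' // HF //; lra.
  apply/eqP; rewrite eq_le key // andbT.
  rewrite -oppr_ge0 -minnerNr opprD; apply: key; [exact: lspanN | exact: EN |].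
  by move=> i Ii; rewrite -opprD minnerNr h0 ?oppr0.
pose mu j := if I0 j then minner w (Fj j) else 0.
exists mu; split.
- move=> j; rewrite /mu; case: ifP => // Ij.
  apply: (@eps_lim _ _ (minner w F0)) => s s0.
  have := FO (Fj j + s *: F0) 0 (lspanD s (sF _) (sF _)) E0.
  rewrite addr0 minnerDr minnerZr; apply => i Ii.
  rewrite minnerDr minnerZr !HF //.
  have : 0 <= (i == j)%:R :> R by rewrite ler0n.
  lra.
- by move=> i /negbTE Ii; rewrite /mu Ii.
move=> F E sFF sE.
pose beta j := if I0 j then minner (g j) (F + E) else 0.
pose G := F + \sum_j beta j *: Fj j.
have sG : lspan h G.
  rewrite /G; elim/big_rec: _ => [|j H _ sH]; first by rewrite addr0.
  have := lspanD (beta j) sH (sF (fun i => - (i == j)%:R)).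
  by move=> s; rewrite addrCA addrC.
have h0 : forall i, I0 i -> minner (g i) (G + E) = 0.
  move=> i Ii; rewrite /G addrAC minnerDr minner_sumr.
  rewrite (eq_bigr (fun j => - (beta j * (i == j)%:R))); last first.
    by move=> j _; rewrite minnerZr HF // mulrN.
  rewrite sumrN (bigD1 i) //= eqxx mulr1 big1 ?addr0.
    by rewrite /beta Ii subrr.
  by move=> j /negbTE; rewrite eq_sym => ->; rewrite mulr0.
have := Ha _ _ sG sE h0.
rewrite /G addrAC => H; rewrite minnerDr minner_sumr in H.
rewrite minnerDl minner_suml -[RHS]H; congr (_ + _).
apply: eq_bigr => j _; rewrite minnerZr minnerZl /beta /mu.
by case: (I0 j); rewrite ?mul0r // mulrC.
Qed.

Lemma ker_supp (R : realType) n1 n2 (X : 'M[R]_(n1, n2)) (J : {set 'I_n2}) :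
  (\rank X < #|J|)%N -> exists u : 'cV[R]_n2,
    [/\ u != 0, (forall k, k \notin J -> u k 0 = 0) & X *m u = 0].
Proof.
move=> rX.
pose MJ : 'M[R]_(#|J|, n2) := \matrix_(i, k) ((k == enum_val i)%:R).
pose M := MJ *m X^T.
have rM : (\rank M < #|J|)%N.
  by apply: leq_ltn_trans (mxrankM_maxr _ _) _; rewrite mxrank_tr.
have kn0 : kermx M != 0.
  by rewrite -mxrank_eq0 mxrank_ker subn_eq0 -ltnNge.
have [i hi] : exists i, row i (kermx M) != 0.
  apply/existsP; apply: contra_notT (elimN eqP kn0) => /existsPn H.
  apply/matrixP => i j; rewrite [RHS]mxE; move: (H i); rewrite negbK => /eqP.
  by move/matrixP/(_ 0 j); rewrite !mxE.
set v := row i (kermx M) in hi.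
have vM : v *m M = 0 by rewrite /v -row_mul mulmx_ker row0.
have [l hl] : exists l, v 0 l != 0.
  apply/existsP; apply: contra_notT (elimN eqP hi) => /existsPn H.
  apply/matrixP => a j; rewrite [a]ord1 [RHS]mxE; move: (H j); rewrite negbK => /eqP //.
pose w := v *m MJ.
have wE k : w 0 k = \sum_i0 v 0 i0 * (k == enum_val i0)%:R.
  by rewrite mxE; apply: eq_bigr => i0 _; rewrite /MJ !mxE.
exists w^T; split.
- apply: contraNneq hl => w0; move/matrixP: w0 => /(_ (enum_val l) 0) h.
  rewrite mxE [RHS]mxE wE (bigD1 l) //= eqxx mulr1 big1 ?addr0 in h; first by rewrite h.
  move=> i0 ne.
  rewrite (_ : (enum_val l == enum_val i0) = false) ?mulr0 //.
  by apply/negbTE; apply: contra ne => /eqP/enum_val_inj ->.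
- move=> k kJ; rewrite [LHS]mxE wE big1 // => i0 _.
  have : enum_val i0 \in J := enum_valP i0.
  move=> iJ; case: eqP => [e|_]; last by rewrite mulr0.
  by move: kJ; rewrite e iJ.
- have -> : X *m w^T = (w *m X^T)^T by rewrite [in RHS]trmx_mul trmxK.
  by rewrite /w -mulmxA -/M vM trmx0.
Qed.

Lemma cauchy_schwarz (R : realType) (I : finType) (x y : I -> R) :
  (\sum_i x i * y i) ^+ 2 <= (\sum_i x i ^+ 2) * (\sum_i y i ^+ 2).
Proof.
set A := \sum_i x i ^+ 2; set B := \sum_i y i ^+ 2; set C := \sum_i x i * y i.
have A0 : 0 <= A by apply: sumr_ge0 => i _; exact: sqr_ge0.
have B0 : 0 <= B by apply: sumr_ge0 => i _; exact: sqr_ge0.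
have key : \sum_i (A * y i - C * x i) ^+ 2 = A ^+ 2 * B - 2 * A * C * C + C ^+ 2 * A.
  rewrite (eq_bigr (fun i => A ^+ 2 * y i ^+ 2 + (- (2 * A * C)) * (x i * y i)
                              + C ^+ 2 * x i ^+ 2)); last by move=> i _; ring.
  rewrite !big_split /= -!mulr_sumr -/A -/B -/C; ring.
have H : 0 <= \sum_i (A * y i - C * x i) ^+ 2.
  by apply: sumr_ge0 => i _; exact: sqr_ge0.
rewrite key in H.
case: (ltrgt0P A) => [Ap|An|Az]; first by nra.
  by lra.
have x0 : forall i, x i = 0.
  move=> i; have /psumr_eq0P := Az.
  move=> /(_ (fun i _ => sqr_ge0 (x i))) /(_ i isT) /eqP; by rewrite sqrf_eq0 => /eqP.
have -> : C = 0 by rewrite /C big1 // => i _; rewrite x0 mul0r.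
by rewrite expr0n /= mulr_ge0.
Qed.

Definition Gc (R : realType) n1 n2 (S : 'M[R]_(n1, n2)) : {set 'I_n2} :=
  [set k | [exists a, S a k != 0]].
Definition Gr (R : realType) n1 n2 (S : 'M[R]_(n1, n2)) : {set 'I_n1} :=
  [set a | [exists k, S a k != 0]].
Definition cn (R : realType) n1 n2 (S : 'M[R]_(n1, n2)) k := \sum_a S a k ^+ 2.
Definition sig2 (R : realType) n1 n2 (S : 'M[R]_(n1, n2)) :=
  (1 + \sum_(k in Gc S) (cn S k)^-1)^-1.

Lemma notGc (R : realType) n1 n2 (S : 'M[R]_(n1, n2)) k a : k \notin Gc S -> S a k = 0.
Proof. rewrite inE => /existsPn /(_ a); by rewrite negbK => /eqP. Qed.

Lemma notGr (R : realType) n1 n2 (S : 'M[R]_(n1, n2)) k a : a \notin Gr S -> S a k = 0.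
Proof. rewrite inE => /existsPn /(_ k); by rewrite negbK => /eqP. Qed.

Lemma cn_pos (R : realType) n1 n2 (S : 'M[R]_(n1, n2)) k : k \in Gc S -> 0 < cn S k.
Proof.
rewrite inE => /existsP [a ha]; rewrite /cn (bigD1 a) //=.
apply: lt_le_trans (_ : 0 < S a k ^+ 2) _; first by rewrite lt_def sqrf_eq0 ha sqr_ge0.
by rewrite lerDl sumr_ge0 // => i _; exact: sqr_ge0.
Qed.

Lemma sig2_pos (R : realType) n1 n2 (S : 'M[R]_(n1, n2)) : 0 < sig2 S.
Proof.
rewrite /sig2 invr_gt0; apply: ltr_wpDr => //; apply: sumr_ge0 => k kG.
by rewrite invr_ge0 ltW // cn_pos.
Qed.

Lemma sig2_le (R : realType) n1 n2 (S : 'M[R]_(n1, n2)) k : k \in Gc S -> sig2 S <= cn S k.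
Proof.
move=> kG; have cp := cn_pos kG.
have h : (cn S k)^-1 <= 1 + \sum_(k in Gc S) (cn S k)^-1.
  rewrite (bigD1 k) //= addrA ler_wpDr //.
    by apply: sumr_ge0 => j /andP[jG _]; rewrite invr_ge0 ltW // cn_pos.
  by rewrite lerDr.
rewrite /sig2 -[cn S k]invrK lef_pV2 ?posrE ?invr_gt0 //.
by apply: lt_le_trans h; rewrite invr_gt0.
Qed.


Lemma sum_single (R : realType) (I : finType) (f : I -> R) :
  (forall j k, j != k -> f j * f k = 0) -> (\sum_i f i) ^+ 2 = \sum_i f i ^+ 2.
Proof.
move=> H; rewrite expr2 mulr_suml; apply: eq_bigr => j _.
rewrite mulr_sumr (bigD1 j) //= big1 ?addr0 ?expr2 // => k kj.
by apply: H; rewrite eq_sym.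
Qed.

Lemma row_le (R : realType) n1 n2 (E : 'M[R]_(n1, n2)) a :
  \sum_k E a k ^+ 2 <= minner E E.
Proof.
rewrite minnerE (bigD1 a) //= (eq_bigr (fun k => E a k * E a k)); last by move=> k _; rewrite expr2.
by rewrite lerDl sumr_ge0 // => i _; apply: sumr_ge0 => k _; rewrite -expr2 sqr_ge0.
Qed.

Lemma entry_bound (R : realType) n1 n2 (S X : 'M[R]_(n1, n2)) a b :
  (forall a k, S a k != 0 -> (a : nat) = k) ->
  (\rank X <= #|Gc S|)%N -> minner (X - S) (X - S) <= sig2 S / 2 ->
  a \notin Gr S -> b \notin Gc S ->
  X a b ^+ 2 * sig2 S <= 2 * (minner (X - S) (X - S)) ^+ 2.
Proof.
move=> diag rk small aG bG.
set E := X - S; set n := minner E E; set s := sig2 S.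
have sp : 0 < s := sig2_pos S.
have n0 : 0 <= n := minner_ge0 E.
have XE i k : X i k = E i k + S i k by rewrite /E !mxE subrK.
pose J := b |: Gc S.
have cJ : #|J| = (#|Gc S|).+1 by rewrite cardsU1 bG.
have [u [un0 usupp Xu0]] : exists u : 'cV[R]_n2,
    [/\ u != 0, (forall k, k \notin J -> u k 0 = 0) & X *m u = 0].
  by apply: ker_supp; rewrite cJ ltnS.
pose uk k := u k 0.
have Xu i : \sum_k X i k * uk k = 0.
  by move/matrixP: Xu0 => /(_ i 0); rewrite !mxE.
pose ug := \sum_(k in Gc S) uk k ^+ 2.
pose ub := uk b ^+ 2.
have ug0 : 0 <= ug by apply: sumr_ge0 => k _; exact: sqr_ge0.
have ub0 : 0 <= ub by exact: sqr_ge0.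
pose u' k := if k == b then 0 else uk k.
have sumU' : \sum_k u' k ^+ 2 = ug.
  rewrite /ug [RHS]big_mkcond; apply: eq_bigr => k _; rewrite /u'.
  case: (k =P b) => [->|nb]; first by rewrite (negbTE bG) expr0n.
  case: ifP => // kG; rewrite /uk usupp ?expr0n // /J in_setU1 kG orbF; exact/eqP.
have sumU : \sum_k uk k ^+ 2 = ug + ub.
  rewrite -sumU' (bigD1 b) //= [in RHS](bigD1 b) //= /u' eqxx expr0n add0r addrC.
  congr (_ + _); apply: eq_bigr => k /negbTE; by rewrite /u' => ->.
have pos : 0 < ug + ub.
  rewrite lt_def; apply/andP; split; last exact: addr_ge0.
  apply: contra un0; rewrite -sumU => /eqP /psumr_eq0P H.
  apply/eqP/matrixP => k j; rewrite [j]ord1 [RHS]mxE; apply/eqP.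
  by rewrite -sqrf_eq0; apply/eqP; apply: H => // i _; exact: sqr_ge0.
have Sb : s * ug <= \sum_i (\sum_k S i k * uk k) ^+ 2.
  rewrite (eq_bigr (fun i => \sum_k (S i k * uk k) ^+ 2)); last first.
    move=> i _; apply: sum_single => j k jk.
    case: (S i j =P 0) => [->|/eqP h1]; first by rewrite !mul0r.
    case: (S i k =P 0) => [->|/eqP h2]; first by rewrite mul0r mulr0.
    by move: jk; rewrite -val_eqE /= -(diag _ _ h1) -(diag _ _ h2) eqxx.
  rewrite exchange_big /=.
  rewrite (eq_bigr (fun k => uk k ^+ 2 * cn S k)); last first.
    by move=> k _; rewrite /cn mulr_sumr; apply: eq_bigr => i _; rewrite exprMn mulrC.
  rewrite [X in _ <= X](bigID (fun k => k \in Gc S)) /= -[X in X <= _]addr0.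
  apply: lerD; last by apply: sumr_ge0 => k _; apply: mulr_ge0; [exact: sqr_ge0 | apply: sumr_ge0 => i _; exact: sqr_ge0].
  rewrite /ug mulr_sumr; apply: ler_sum => k kG.
  by rewrite mulrC ler_wpM2l ?sig2_le // sqr_ge0.
have Eb : \sum_i (\sum_k E i k * uk k) ^+ 2 <= n * (ug + ub).
  apply: le_trans (_ : _ <= \sum_i (\sum_k E i k ^+ 2) * (\sum_k uk k ^+ 2)) _.
    by apply: ler_sum => i _; exact: cauchy_schwarz.
  rewrite -mulr_suml sumU /n minnerE; apply: ler_wpM2r; first exact: addr_ge0.
  by apply: ler_sum => i _; apply: ler_sum => k _; rewrite expr2.
have SE i : \sum_k S i k * uk k = - \sum_k E i k * uk k.
  apply/eqP; rewrite -addr_eq0 -big_split /=; apply/eqP; rewrite -[RHS](Xu i).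
  by apply: eq_bigr => k _; rewrite XE mulrDl addrC.
have star : s * ug <= n * (ug + ub).
  apply: le_trans Sb _; apply: le_trans Eb; apply: ler_sum => i _.
  by rewrite SE sqrrN.
pose e' k := if k == b then 0 else E a k.
have Xa : X a b * uk b + \sum_k e' k * u' k = 0.
  have := Xu a; rewrite (bigD1 b) //= => h; rewrite -[RHS]h.
  rewrite (bigD1 b) //= /e' eqxx mul0r add0r.
  congr (_ + _); apply: eq_bigr => k /negbTE kb; rewrite /u' kb XE (notGr _ aG) addr0 //.
have rowCS : (X a b * uk b) ^+ 2 <= n * ug.
  have -> : X a b * uk b = - \sum_k e' k * u' k by apply/eqP; rewrite -addr_eq0 Xa.
  rewrite sqrrN; apply: le_trans (cauchy_schwarz _ _) _; rewrite sumU'.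
  apply: ler_wpM2r => //; apply: le_trans (row_le E a); apply: ler_sum => k _.
  by rewrite /e'; case: eqP => _; rewrite ?expr0n ?sqr_ge0.
rewrite exprMn -/ub in rowCS.
have h1 : ug <= ub.
  have hh : n * (ug + ub) <= s / 2 * (ug + ub) by rewrite ler_wpM2r // ltW.
  have : s * ug <= s * ub by nra.
  by rewrite ler_pM2l.
have ubp : 0 < ub by lra.
have h2 : s * ug <= 2 * n * ub by nra.
have h3 : X a b ^+ 2 * ub * s <= n * (2 * n * ub) by nra.
have : X a b ^+ 2 * s * ub <= 2 * n ^+ 2 * ub by rewrite mulrAC; apply: le_trans h3 _; rewrite expr2; lra.
by rewrite ler_pM2r.
Qed.

Lemma abs_le_sq (R : realType) (x y : R) : 0 <= y -> x ^+ 2 <= y ^+ 2 -> `|x| <= y.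
Proof.
move=> y0 h; have := real_normK (num_real x); have := normr_ge0 x; nra.
Qed.

Lemma frechet_diag (R : realType) n1 n2 (S Yp : 'M[R]_(n1, n2)) :
  (forall a k, S a k != 0 -> (a : nat) = k) ->
  (forall a b, (a \in Gr S) || (b \in Gc S) -> Yp a b = 0) ->
  forall eps, 0 < eps -> exists delta, 0 < delta /\ forall X : 'M[R]_(n1, n2),
    (\rank X <= #|Gc S|)%N ->
    Num.sqrt (minner (X - S) (X - S)) < delta ->
    minner Yp (X - S) <= eps * Num.sqrt (minner (X - S) (X - S)).
Proof.
move=> diag Y0 eps ep.
set s := sig2 S; have sp : 0 < s := sig2_pos S.
set c := 1 + 2 / s.
have c1 : 1 <= c by rewrite lerDl divr_ge0 // ltW.
have cs : 2 / s <= c ^+ 2.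
  apply: le_trans (_ : c <= c ^+ 2); first by rewrite lerDr.
  by rewrite expr2 ler_peMl // (le_trans _ c1).
set Ys := \sum_a \sum_b `|Yp a b|.
have Ys0 : 0 <= Ys by apply: sumr_ge0 => a _; apply: sumr_ge0 => b _.
have d1p : 0 < eps / (Ys * c + 1).
  by rewrite divr_gt0 // ltr_wpDl // mulr_ge0 // (le_trans _ c1).
have d2p : 0 < Num.sqrt (s / 2) by rewrite sqrtr_gt0 divr_gt0.
exists (Num.min (eps / (Ys * c + 1)) (Num.sqrt (s / 2))); split; first by rewrite lt_min d1p d2p.
move=> X rk; set n := minner (X - S) (X - S); set r := Num.sqrt n.
have n0 : 0 <= n := minner_ge0 _.
have r0 : 0 <= r := sqrtr_ge0 _.
have nr : n = r * r by rewrite /r -expr2 sqr_sqrtr.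
rewrite lt_min => /andP[h1 h2].
have small : n <= s / 2.
  by move: h2; rewrite /r ltr_sqrt ?divr_gt0 // => /ltW.
have ent a b : Yp a b * (X - S) a b <= `|Yp a b| * (c * n).
  case: (boolP ((a \in Gr S) || (b \in Gc S))) => hab.
    by rewrite Y0 // mul0r normr0 mul0r.
  move: hab; rewrite negb_or => /andP[aG bG].
  have eb := entry_bound diag rk small aG bG.
  rewrite !mxE (notGc _ bG) oppr0 addr0.
  apply: le_trans (ler_norm _) _; rewrite normrM ler_wpM2l //.
  apply: abs_le_sq; first by rewrite mulr_ge0 // (le_trans _ c1).
  rewrite exprMn; apply: le_trans (_ : 2 / s * n ^+ 2 <= _); last by rewrite ler_wpM2r // sqr_ge0.
  by rewrite mulrAC ler_pdivlMr.
have tot : minner Yp (X - S) <= Ys * (c * n).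
  rewrite minnerE /Ys mulr_suml; apply: ler_sum => a _; rewrite mulr_suml.
  by apply: ler_sum => b _; exact: ent.
apply: le_trans tot _.
have : (Ys * c + 1) * r <= eps by rewrite -ler_pdivlMl ?ltr_wpDl ?mulr_ge0 ?(le_trans _ c1) // ltW // mulrC.
rewrite nr; nra.
Qed.

Lemma deltaW_E (R : realType) n1 n2 (W : 'M[R]_(n1, n2)) (a b : 'I_n1) i j :
  (delta_mx a b *m W) i j = (i == a)%:R * W b j.
Proof.
rewrite mxE (bigD1 b) //= big1 ?addr0; first by rewrite mxE eqxx andbT.
by move=> l lb; rewrite mxE (negbTE lb) andbF mul0r.
Qed.

Lemma Wdelta_E (R : realType) n1 n2 (W : 'M[R]_(n1, n2)) (a b : 'I_n2) i j :
  (W *m delta_mx a b) i j = W i a * (j == b)%:R.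
Proof.
rewrite mxE (bigD1 a) //= big1 ?addr0; first by rewrite mxE eqxx.
by move=> l la; rewrite mxE (negbTE la) mulr0.
Qed.

Lemma minner_dL (R : realType) n1 n2 (B W : 'M[R]_(n1, n2)) (a b : 'I_n1) :
  minner B (delta_mx a b *m W) = (B *m W^T) a b.
Proof.
rewrite minnerE (bigD1 a) //= [X in _ + X]big1 ?addr0.
  rewrite mxE; apply: eq_bigr => j _; by rewrite deltaW_E eqxx mul1r mxE.
move=> i ia; apply: big1 => j _; by rewrite deltaW_E (negbTE ia) mul0r mulr0.
Qed.

Lemma minner_dR (R : realType) n1 n2 (B W : 'M[R]_(n1, n2)) (a b : 'I_n2) :
  minner B (W *m delta_mx a b) = (W^T *m B) a b.
Proof.
rewrite minnerE mxE; apply: eq_bigr => i _.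
rewrite (bigD1 b) //= big1 ?addr0.
  by rewrite Wdelta_E eqxx mulr1 mxE mulrC.
by move=> j jb; rewrite Wdelta_E (negbTE jb) mulr0 mulr0.
Qed.

Definition hLR (R : realType) n1 n2 (W : 'M[R]_(n1, n2))
  (t : ('I_n1 * 'I_n1) + ('I_n2 * 'I_n2)) : 'M[R]_(n1, n2) :=
  match t with inl p => delta_mx p.1 p.2 *m W | inr p => W *m delta_mx p.1 p.2 end.

Definition hL (R : realType) n1 n2 (W : 'M[R]_(n1, n2)) (p : 'I_n1 * 'I_n1) : 'M[R]_(n1, n2) :=
  delta_mx p.1 p.2 *m W.

Lemma spanL_decomp (R : realType) n1 n2 (W : 'M[R]_(n1, n2)) (x : 'I_n1 * 'I_n1 -> R) :
  \sum_t x t *: hL W t = (\matrix_(a, b) x (a, b)) *m W.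
Proof.
rewrite [in RHS](matrix_sum_delta (\matrix_(a, b) x (a, b))) mulmx_suml.
under [in RHS]eq_bigr do rewrite mulmx_suml.
rewrite pair_bigA /=; apply: eq_bigr => [[a b]] _ /=.
by rewrite mxE -scalemxAl.
Qed.

Lemma spanLR_decomp (R : realType) n1 n2 (W : 'M[R]_(n1, n2))
    (x : ('I_n1 * 'I_n1) + ('I_n2 * 'I_n2) -> R) :
  \sum_t x t *: hLR W t =
  (\matrix_(a, b) x (inl (a, b))) *m W + W *m (\matrix_(a, b) x (inr (a, b))).
Proof.
rewrite big_sumType /=; congr (_ + _).
  have := spanL_decomp W (fun p => x (inl p)); rewrite /hL => <-.
  by apply: eq_bigr.
rewrite [in RHS](matrix_sum_delta (\matrix_(a, b) x (inr (a, b)))) mulmx_sumr.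
under [in RHS]eq_bigr do rewrite mulmx_sumr.
rewrite pair_bigA /=; apply: eq_bigr => [[a b]] _ /=.
by rewrite mxE -scalemxAr.
Qed.

Lemma rank_sum_le (R : realType) n1 n2 (I : finType) (P : pred I) (F : I -> 'M[R]_(n1, n2)) :
  (\rank (\sum_(i | P i) F i)%R <= \sum_(i | P i) \rank (F i))%N.
Proof.
apply: (big_ind2 (fun M k => \rank M <= k)%N); first by rewrite mxrank0.
  move=> M1 k1 M2 k2 h1 h2; apply: leq_trans (mxrank_add _ _) _; exact: leq_add.
by [].
Qed.

Lemma rank_le_Gc (R : realType) n1 n2 (S : 'M[R]_(n1, n2)) : (\rank S <= #|Gc S|)%N.
Proof.
have SE : S = \sum_(k in Gc S) S *m delta_mx k k.
  apply/matrixP => a j; rewrite summxE.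
  rewrite (eq_bigr (fun k => S a k * (j == k)%:R)); last by move=> k _; rewrite Wdelta_E.
  case: (boolP (j \in Gc S)) => jG.
    rewrite (bigD1 j) //= eqxx mulr1 big1 ?addr0 // => k /andP[_ kj].
    by rewrite eq_sym (negbTE kj) mulr0.
  rewrite (notGc _ jG) big1 // => k kG; case: eqP => [jk|_]; last by rewrite mulr0.
  by move: jG; rewrite jk kG.
rewrite [X in (\rank X <= _)%N]SE; apply: leq_trans (rank_sum_le _ _) _.
rewrite -sum1_card; apply: leq_sum => k _.
by apply: leq_trans (mxrankM_maxr _ _) _; rewrite mxrank_delta.
Qed.

Lemma minner_col (R : realType) p q m (A : 'I_m -> 'M[R]_(p.+1, q)) (f : 'I_m -> R) D :
  minner (\col_i f i) (Aop A D) = minner (\sum_i f i *: A i) D.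
Proof.
rewrite minnerE minner_suml; apply: eq_bigr => i _.
by rewrite big_ord1 !mxE minnerZl.
Qed.

Lemma kkt_of (R : realType) p q m r (beta : R) (A : 'I_m -> 'M[R]_(p.+1, q)) W z
    (mu : 'I_m -> R) :
  0 < beta -> feasible A r W z ->
  (forall i, 0 <= mu i) -> (forall i, z i 0 != 0 -> mu i = 0) ->
  (forall eps, 0 < eps -> exists delta, 0 < delta /\ forall W' z',
     feasible A r W' z' -> 0 < pnorm (W' - W) (z' - z) -> pnorm (W' - W) (z' - z) < delta ->
     minner (- (W + \sum_i mu i *: A i)) (W' - W) <= eps * pnorm (W' - W) (z' - z)) ->
  KKT A beta r W z.
Proof.
move=> bp [fz fr] mu0 musupp Hfr.
exists 0, (\col_i (mu i / beta)); split; [|split; [|split]].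
- move=> i; split => [nz|z0]; rewrite mxE; first by rewrite (musupp i nz) mul0r.
  by rewrite divr_ge0 // ltW.
- move=> eps ep; have [d [dp H]] := Hfr eps ep; exists d; split => // W' z' f' h1 h2.
  have dz : z' - z = Aop A (W' - W).
    case: f' => fz' _; rewrite -fz' -fz AopB; apply/matrixP => i j; rewrite !mxE; ring.
  have A0 : Aadj A 0 = 0 by rewrite /Aadj big1 // => i _; rewrite mxE scale0r.
  have bd : beta *: (\col_i (mu i / beta)) - 0 = \col_i mu i.
    apply/matrixP => i j; rewrite !mxE subr0 mulrCA mulrV ?mulr1 // unitfE gt_eqF //.
  suff -> : minner (- (W + Aadj A 0)) (W' - W) + minner (- (beta *: \col_i (mu i / beta) - 0)) (z' - z)
      = minner (- (W + \sum_i mu i *: A i)) (W' - W) by exact: H.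
  by rewrite A0 addr0 bd dz !minnerNl minner_col -opprD -minnerDl -minnerNl.
- exact: fr.
- by rewrite fz subrr.
Qed.

Lemma colzero (R : realType) n1 n2 (S Bp : 'M[R]_(n1, n2)) a b :
  (forall a k, S a k != 0 -> (a : nat) = k) ->
  Bp *m S^T = 0 -> b \in Gc S -> Bp a b = 0.
Proof.
move=> diag H; rewrite inE => /existsP [a0 h0].
move/matrixP: H => /(_ a a0); rewrite !mxE (bigD1 b) //= big1 ?addr0.
  by rewrite mxE => /eqP; rewrite mulf_eq0 (negbTE h0) orbF => /eqP.
move=> k kb; rewrite mxE; case: (S a0 k =P 0) => [->|/eqP h]; first by rewrite mulr0.
by move: kb; rewrite -val_eqE /= -(diag _ _ h) (diag _ _ h0) eqxx.
Qed.

Lemma rowzero (R : realType) n1 n2 (S Bp : 'M[R]_(n1, n2)) a b :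
  (forall a k, S a k != 0 -> (a : nat) = k) ->
  S^T *m Bp = 0 -> a \in Gr S -> Bp a b = 0.
Proof.
move=> diag H; rewrite inE => /existsP [k0 h0].
move/matrixP: H => /(_ k0 b); rewrite !mxE (bigD1 a) //= big1 ?addr0.
  by rewrite mxE => /eqP; rewrite mulf_eq0 (negbTE h0) /= => /eqP.
move=> i ia; rewrite mxE; case: (S i k0 =P 0) => [->|/eqP h]; first by rewrite mul0r.
by move: ia; rewrite -val_eqE /= (diag _ _ h) -(diag _ _ h0) eqxx.
Qed.

Lemma coordR (R : realType) n1 n2 (U : 'M[R]_n1) (V : 'M[R]_n2) (S B : 'M[R]_(n1, n2)) :
  U^T *m U = 1%:M -> B *m (U *m S *m V^T)^T = 0 -> (U^T *m B *m V) *m S^T = 0.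
Proof.
move=> UU h.
have : B *m (U *m S *m V^T)^T *m U = 0 by rewrite h mul0mx.
rewrite !trmx_mul trmxK !mulmxA -(mulmxA _ U^T U) UU mulmx1 => h2.
by rewrite -(mulmxA U^T) -(mulmxA U^T) h2 mulmx0.
Qed.

Lemma coordL (R : realType) n1 n2 (U : 'M[R]_n1) (V : 'M[R]_n2) (S B : 'M[R]_(n1, n2)) :
  V^T *m V = 1%:M -> (U *m S *m V^T)^T *m B = 0 -> S^T *m (U^T *m B *m V) = 0.
Proof.
move=> VV h.
have : V^T *m ((U *m S *m V^T)^T *m B) = 0 by rewrite h mulmx0.
rewrite !trmx_mul trmxK !mulmxA VV mul1mx => h2.
by rewrite ?mulmxA h2 mul0mx.
Qed.

Lemma orth_inv (R : realType) n1 n2 (U : 'M[R]_n1) (V : 'M[R]_n2) (M N : 'M[R]_(n1, n2)) :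
  U *m U^T = 1%:M -> V *m V^T = 1%:M ->
  minner (U^T *m M *m V) (U^T *m N *m V) = minner M N.
Proof.
move=> UU VV; rewrite /minner !trmx_mul !trmxK.
rewrite !mulmxA -(mulmxA _ U U^T) UU mulmx1.
by rewrite mxtrace_mulC !mulmxA VV mul1mx.
Qed.

Lemma conj_lin (R : realType) p q m (U : 'M[R]_p.+1) (V : 'M[R]_q)
   (A : 'I_m -> 'M[R]_(p.+1, q)) (c : 'I_m -> R) :
  U^T *m (\sum_i c i *: A i) *m V = \sum_i c i *: (U^T *m A i *m V).
Proof.
rewrite mulmx_sumr mulmx_suml; apply: eq_bigr => i _.
by rewrite -scalemxAr -scalemxAl.
Qed.

Lemma Tmat_lin (R : realType) p q m (U : 'M[R]_p.+1) (V : 'M[R]_q) (S : 'M[R]_(p.+1, q))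
   (A : 'I_m -> 'M[R]_(p.+1, q)) (c : 'I_m -> R) :
  \sum_i c i *: Tmat U V S (A i) = Tmat U V S (\sum_i c i *: A i).
Proof.
apply/matrixP => a b; rewrite summxE [RHS]mxE conj_lin summxE.
case: ifP => h; first by apply: eq_bigr => i _; rewrite !mxE h.
by rewrite big1 // => i _; rewrite !mxE h mulr0.
Qed.

Lemma Rmat_lin (R : realType) p q m (U : 'M[R]_p.+1) (V : 'M[R]_q) (S : 'M[R]_(p.+1, q))
   (A : 'I_m -> 'M[R]_(p.+1, q)) (c : 'I_m -> R) :
  \sum_i c i *: Rmat U V S (A i) = Rmat U V S (\sum_i c i *: A i).
Proof.
apply/matrixP => a b; rewrite summxE [RHS]mxE conj_lin summxE.
case: ifP => h; first by apply: eq_bigr => i _; rewrite !mxE h.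
by rewrite big1 // => i _; rewrite !mxE h mulr0.
Qed.

Lemma inGamma_c (R : realType) p q (S : 'M[R]_(p.+1, q)) (b : 'I_q) :
  inGamma S b -> b \in Gc S.
Proof.
move=> /existsP [i /existsP [j /and3P [hi hj hS]]].
have -> : b = j by apply/val_inj; rewrite /= (eqP hj).
by rewrite inE; apply/existsP; exists i.
Qed.

Lemma inGamma_r (R : realType) p q (S : 'M[R]_(p.+1, q)) (a : 'I_p.+1) :
  inGamma S a -> a \in Gr S.
Proof.
move=> /existsP [i /existsP [j /and3P [hi hj hS]]].
have -> : a = i by apply/val_inj; rewrite /= (eqP hi).
by rewrite inE; apply/existsP; exists j.
Qed.

Lemma minner_delta (R : realType) n1 n2 (B : 'M[R]_(n1, n2)) a b :
  minner B (delta_mx a b) = B a b.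
Proof.
rewrite minnerE (bigD1 a) //= [X in _ + X]big1 ?addr0.
  rewrite (bigD1 b) //= [X in _ + X]big1 ?addr0; first by rewrite mxE !eqxx mulr1.
  by move=> j jb; rewrite mxE (negbTE jb) andbF mulr0.
by move=> i ia; apply: big1 => j _; rewrite mxE (negbTE ia) mulr0.
Qed.

Unset Implicit Arguments.

Theorem theorem1 (R : realType) (p q m r : nat) (beta : R)
    (A : 'I_m -> 'M[R]_(p.+1, q)) (W : 'M[R]_(p.+1, q)) (z : 'cV[R]_m) :
  0 < beta -> (0 < r)%N -> (r < minn p.+1 q)%N ->
  local_min A beta r W z -> assumption1 A r W ->
  KKT A beta r W z.
Proof.
move=> bp r0 rmin lm [U [V [S [[UU VV WE Sdiag _] [CQT CQR]]]]].
have diag : forall a k, S a k != 0 -> (a : nat) = k.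
  move=> a k h; case: (boolP ((a : nat) == k)) => [/eqP //|ne]; by move: h; rewrite (Sdiag a k (elimN eqP ne)) eqxx.
have UUt := mulmx1C UU; have VVt := mulmx1C VV.
have lm' := lm; case: lm => [[fz frk] _].
pose I0 : pred 'I_m := fun i => z i 0 == 0.
case: (ltngtP (\rank W) r) => hr.
-
  have CQ : forall c : 'I_m -> R, (forall i, ~~ I0 i -> c i = 0) ->
      (forall t, minner (\sum_i c i *: A i) (hL W t) = 0) -> forall i, c i = 0.
    move=> c _ hc; apply: (CQR hr c); rewrite Rmat_lin.
    set B := \sum_i c i *: A i.
    have BW : B *m W^T = 0.
      by apply/matrixP => a b; rewrite -minner_dL [RHS]mxE; exact: (hc (a, b)).
    have Bp : (U^T *m B *m V) *m S^T = 0 by apply: coordR UU _; rewrite -WE.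
    apply/matrixP => a b; rewrite /Rmat [LHS]mxE [RHS]mxE; case: ifP => // hg.
    exact: colzero diag Bp (inGamma_c hg).
  have FO' : forall F E, lspan (hL W) F -> (\rank E <= 1)%N ->
      (forall i, I0 i -> minner (A i) (F + E) < 0) -> 0 <= minner W (F + E).
    move=> F E [x ->] rE H; rewrite spanL_decomp in H *.
    set X := \matrix_(a, b) x (a, b) in H *.
    have := FO (X := X) (Y := 0) (E := E) (ltW bp) lm'; rewrite mulmx0 addr0; apply.
      by apply: leq_trans (leq_add (leqnn _) rE) _; rewrite addn1.
    by move=> i zi; apply: H; rewrite /I0 zi.
  have E0 : (\rank (0%R : 'M[R]_(p.+1, q)) <= 1)%N by rewrite mxrank0.
  have EN : forall E : 'M[R]_(p.+1, q), (\rank E <= 1)%N -> (\rank (- E)%R <= 1)%N.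
    by move=> E; rewrite mxrank_opp.
  have [mu [mu0 musupp Hperp]] := mult CQ E0 EN FO'.
  have B0 : W + \sum_i mu i *: A i = 0.
    apply/matrixP => a b; rewrite -minner_delta [RHS]mxE.
    have := Hperp 0 (delta_mx a b) (lspan0 _); rewrite add0r mxrank_delta; exact.
  apply: (kkt_of (mu := mu) bp (conj fz frk) mu0).
    by move=> i nz; apply: musupp.
  move=> eps ep; exists 1; split => // W' z' _ _ _.
  by rewrite B0 oppr0 minner0l /pnorm; apply: mulr_ge0; [exact: ltW | exact: sqrtr_ge0].
- by move: frk; rewrite leqNgt hr.
-
  have CQ : forall c : 'I_m -> R, (forall i, ~~ I0 i -> c i = 0) ->
      (forall t, minner (\sum_i c i *: A i) (hLR W t) = 0) -> forall i, c i = 0.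
    move=> c _ hc; apply: (CQT hr c); rewrite Tmat_lin.
    set B := \sum_i c i *: A i.
    have BW : B *m W^T = 0.
      by apply/matrixP => a b; rewrite -minner_dL [RHS]mxE; exact: (hc (inl (a, b))).
    have WB : W^T *m B = 0.
      by apply/matrixP => a b; rewrite -minner_dR [RHS]mxE; exact: (hc (inr (a, b))).
    have Bp1 : (U^T *m B *m V) *m S^T = 0 by apply: coordR UU _; rewrite -WE.
    have Bp2 : S^T *m (U^T *m B *m V) = 0 by apply: coordL VV _; rewrite -WE.
    apply/matrixP => a b; rewrite /Tmat [LHS]mxE [RHS]mxE; case: ifP => // /orP [ha|hb].
      exact: rowzero diag Bp2 (inGamma_r ha).
    exact: colzero diag Bp1 (inGamma_c hb).
  have FO' : forall F E, lspan (hLR W) F -> E = 0 ->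
      (forall i, I0 i -> minner (A i) (F + E) < 0) -> 0 <= minner W (F + E).
    move=> F E [x ->] -> H; rewrite addr0 spanLR_decomp in H *.
    set X := \matrix_(a, b) x (inl (a, b)) in H *.
    set Y := \matrix_(a, b) x (inr (a, b)) in H *.
    have := FO (X := X) (Y := Y) (E := 0) (ltW bp) lm'; rewrite addr0; apply.
      by rewrite mxrank0 addn0 hr.
    by move=> i zi; apply: H; rewrite /I0 zi.
  have EN : forall E : 'M[R]_(p.+1, q), E = 0 -> - E = 0 by move=> E ->; rewrite oppr0.
  have [mu [mu0 musupp Hperp]] := mult CQ (erefl 0) EN FO'.
  set B := W + \sum_i mu i *: A i in Hperp *.
  have BW : B *m W^T = 0.
    apply/matrixP => a b; rewrite -minner_dL [RHS]mxE.
    by have := Hperp _ 0 (lspanh (hLR W) (inl (a, b))) erefl; rewrite addr0.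
  have WB : W^T *m B = 0.
    apply/matrixP => a b; rewrite -minner_dR [RHS]mxE.
    by have := Hperp _ 0 (lspanh (hLR W) (inr (a, b))) erefl; rewrite addr0.
  have Bp1 : (U^T *m B *m V) *m S^T = 0 by apply: coordR UU _; rewrite -WE.
  have Bp2 : S^T *m (U^T *m B *m V) = 0 by apply: coordL VV _; rewrite -WE.
  set Yp := - (U^T *m B *m V).
  have Ypat : forall a b, (a \in Gr S) || (b \in Gc S) -> Yp a b = 0.
    move=> a b /orP [h|h]; rewrite mxE.
      by rewrite (@rowzero _ _ _ S _ a b diag Bp2 h) oppr0.
    by rewrite (@colzero _ _ _ S _ a b diag Bp1 h) oppr0.
  apply: (kkt_of (mu := mu) bp (conj fz frk) mu0).
    by move=> i nz; apply: musupp.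
  move=> eps ep; have [d [dp Hd]] := frechet_diag diag Ypat ep.
  exists d; split => // W' z' [_ frk'] h1 h2.
  set X := U^T *m W' *m V.
  have XS : X - S = U^T *m (W' - W) *m V.
    rewrite mulmxBr mulmxBl; congr (_ - _).
    by rewrite WE !mulmxA UU mul1mx -mulmxA VV mulmx1.
  have rX : (\rank X <= #|Gc S|)%N.
    apply: leq_trans (mxrankM_maxl _ _) _; apply: leq_trans (mxrankM_maxr _ _) _.
    apply: leq_trans frk' _; rewrite -hr WE.
    apply: leq_trans (mxrankM_maxl _ _) _; apply: leq_trans (mxrankM_maxr _ _) _.
    exact: rank_le_Gc.
  have hN : minner (X - S) (X - S) = minner (W' - W) (W' - W) by rewrite XS orth_inv.
  have hsq : Num.sqrt (minner (W' - W) (W' - W)) <= pnorm (W' - W) (z' - z).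
    by rewrite /pnorm ler_sqrt ?lerDl ?minner_ge0 // addr_ge0 // minner_ge0.
  have Hx := Hd X rX.
  have eqY : minner (- B) (W' - W) = minner Yp (X - S).
    by rewrite XS /Yp -mulNmx -mulmxN orth_inv.
  rewrite eqY; apply: le_trans (Hx _) _.
    by rewrite hN; apply: le_lt_trans hsq h2.
  by rewrite hN ler_wpM2l // ltW.
Qed.
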